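(* Let $R$ be a unital associative ring and $$A=\begin{pmatrix}1&1&1\\1&a&b\\1&c&d\end{pmatrix}\in\widehat{\cal S},\qquad \Psi(A)=\begin{pmatrix}1&1&1\\1&a^+&b^+\\1&c^+&d^+\end{pmatrix}.$$ Then $$a^+=(d-c)^{-1}(db^{-1}-ca^{-1})(db^{-1}-1)^{-1}(d-1).$$
   Context: $R^*$: units of $R$. $M_3^*(R)$: invertible $3\times3$ matrices; $M_3^\star(R)$: matrices with all entries in $R^*$. $J_1(M)=M^{-1}$; $J_2(M)_{jk}=(M_{kj})^{-1}$; $J=J_2\circ J_1$. $\widehat M_3(R)$: matrices whose first row and column consist of $1$'s. For $A=\{a_{j,k}\}\in M_3^\star(R)$: $\Lambda^L(A)_{j,k}=a_{1,1}a_{j,1}^{-1}a_{j,k}a_{1,k}^{-1}$. $\Phi(A)=J_2(\Lambda^L(A^{-1}))$ and $\Psi=J_2\circ\Phi\circ J_2$. ${\cal S}=\{M\in M_3(R):$ all square submatrices of $M$ are invertible and $J_2(M)$ is invertible$\}$, $\widehat{\cal S}={\cal S}\cap\widehat M_3(R)$. *)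

(* Defs.v *)
From HB Require Import structures.
From mathcomp Require Import all_boot all_order all_algebra.
From Stdlib Require Import ClassicalEpsilon.
Set Implicit Arguments. Unset Strict Implicit. Unset Printing Implicit Defensive.
Import GRing.Theory.
Local Open Scope ring_scope.

Section Defs.
Variable R : unitRingType.

Definition mx_invertible n (M : 'M[R]_n) : Prop :=
  exists B : 'M[R]_n, M *m B = 1%:M /\ B *m M = 1%:M.

(* J_1(M) = M^{-1}: the two-sided inverse (unique), chosen classically;
   defaults to M when M is not invertible (never used there). *)
Definition mxinv n (M : 'M[R]_n) : 'M[R]_n :=
  match excluded_middle_informative (mx_invertible M) with
  | left h => proj1_sig (constructive_indefinite_description _ h)
  | right _ => M
  end.

Definition J2 n (M : 'M[R]_n) : 'M[R]_n := \matrix_(j, k) (M k j)^-1.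

Definition all_units n (M : 'M[R]_n) : Prop :=
  forall i j, M i j \is a GRing.unit.

(* Lambda^L(A)_{j,k} = a_{11} a_{j1}^{-1} a_{jk} a_{1k}^{-1} (1-based indices) *)
Definition LambdaL n (A : 'M[R]_n.+1) : 'M[R]_n.+1 :=
  \matrix_(j, k) (A 0 0 * (A j 0)^-1 * A j k * (A 0 k)^-1).

Definition Phi n (A : 'M[R]_n.+1) : 'M[R]_n.+1 := J2 (LambdaL (mxinv A)).
Definition Psi n (A : 'M[R]_n.+1) : 'M[R]_n.+1 := J2 (Phi (J2 A)).

Definition all_square_submx_invertible m n (M : 'M[R]_(m, n)) : Prop :=
  forall k (f : 'I_k -> 'I_m) (g : 'I_k -> 'I_n),
    (forall i j : 'I_k, (i < j)%N -> (f i < f j)%N) ->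
    (forall i j : 'I_k, (i < j)%N -> (g i < g j)%N) ->
    mx_invertible (mxsub f g M).

Definition in_S (M : 'M[R]_3) : Prop :=
  all_square_submx_invertible M /\ mx_invertible (J2 M).

Definition in_hatM (M : 'M[R]_3) : Prop :=
  forall i : 'I_3, M 0 i = 1 /\ M i 0 = 1.

Definition in_hatS (M : 'M[R]_3) : Prop := in_S M /\ in_hatM M.

Definition mx3 (a b c d : R) : 'M[R]_3 :=
  \matrix_(i < 3, j < 3)
    match nat_of_ord i, nat_of_ord j with
    | 1, 1 => a
    | 1, 2 => b
    | 2, 1 => c
    | 2, 2 => d
    | _, _ => 1
    end.

Definition i1 : 'I_3 := inord 1.

End Defs.

(* Main.v *)
Require Import Defs.
From mathcomp Require Import all_boot all_order all_algebra.
From Stdlib Require Import ClassicalEpsilon.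
Import GRing.Theory.
Local Open Scope ring_scope.
Set Implicit Arguments. Unset Strict Implicit.

Section Alg.
Variable R : unitRingType.
Lemma z1 (x y z w : R) : x + y + z = w -> x = w - (y + z).
Proof. move=> <-; by rewrite -(addrA x) addrK. Qed.
Lemma z2 (x y z w p : R) : x = - (y + z) -> x = - (w + p) -> y + z = w + p.
Proof. by move=> -> /oppr_inj. Qed.
Lemma z3 (x y z w : R) : x + y = z + w -> w - y = x - z.
Proof. move=> h. apply/eqP; rewrite subr_eq eq_sym addrAC subr_eq h (addrC z) //. Qed.
Lemma z5 (p q a b : R) : p + -(p+q)*a + q*b = p*(1-a) + q*(b-a).
Proof. rewrite mulNr mulrDl opprD mulrBr mulrBr mulr1 !addrA.
by rewrite (addrAC _ (- (q * a))). Qed.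
Lemma unit_lr (x y z : R) : y * x = 1 -> x * z = 1 -> x \is a GRing.unit.
Proof.
move=> h1 h2; have yz : y = z by rewrite -[y]mulr1 -h2 mulrA h1 mul1r.
by apply/unitrP; exists y; rewrite {2}yz.
Qed.
Lemma pieceA (a' b' c' d' u x00 x10 x20 x11 x12 : R) :
  u = d' - c' -> u \is a GRing.unit ->
  x00 + x10 + x20 = 1 -> x00 + a'*x10 + c'*x20 = 0 -> x00 + b'*x10 + d'*x20 = 0 ->
  x10 + x11 + x12 = 0 -> x10 + x11*a' + x12*b' = 1 -> x10 + x11*c' + x12*d' = 0 ->
  x10 \is a GRing.unit /\ x00 = -(a' + c' * u^-1 * (a' - b')) * x10.
Proof.
move=> hu Uu E1 E2 E3 F1 F2 F3.
have e2 := z1 E2; have e3 := z1 E3; rewrite sub0r in e2; rewrite sub0r in e3.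
have := z3 (z2 e2 e3); rewrite -!mulrBl -hu => e20.
have x20E : x20 = u^-1 * (a' - b') * x10 by rewrite -mulrA -e20 mulKr.
have x00E : x00 = -(a' + c' * u^-1 * (a' - b')) * x10.
  by rewrite e2 x20E !mulrA mulNr mulrDl.
split=> //.
have x11E : x11 = -(x10 + x12).
  by apply/eqP; rewrite -addr_eq0 addrC addrAC F1.
rewrite x11E z5 -hu in F3; rewrite x11E z5 in F2.
have x12E : x12 = - (x10 * (1 - c')) / u.
  apply: (mulIr Uu); rewrite divrK //; apply/eqP; by rewrite -addr_eq0 addrC F3.
apply: (@unit_lr _ (-(a' + c' * u^-1 * (a' - b')) + 1 + u^-1 * (a' - b'))
                 ((1-a') - (1-c') * u^-1 * (b' - a'))).
  by rewrite !mulrDl mul1r -x00E -x20E.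
rewrite x12E !mulNr in F2. by rewrite mulrBr !mulrA.
Qed.
Lemma z6 (p q a b : R) : p + a * q + b * (- (p + q)) = (1 - b) * p + (a - b) * q.
Proof. rewrite mulrN mulrDr opprD mulrBl mulrBl mul1r !addrA.
by rewrite (addrAC p (a * q)). Qed.
Lemma z7 (p q a b : R) : -(p*a + q*b) + p + q = p*(1-a) + q*(1-b).
Proof. rewrite opprD mulrBr mulrBr !mulr1 !addrA.
by rewrite (addrAC (-(p*a))) (addrAC (-(p*a) + p)) (addrC (-(p*a)) p). Qed.
Lemma pieceB (a' b' c' d' v x00 x01 x02 x11 x21 : R) :
  v = d' - b' -> v \is a GRing.unit ->
  x01 + x11 + x21 = 0 -> x01 + a'*x11 + c'*x21 = 1 -> x01 + b'*x11 + d'*x21 = 0 ->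
  x00 + x01 + x02 = 1 -> x00 + x01*a' + x02*b' = 0 -> x00 + x01*c' + x02*d' = 0 ->
  x01 \is a GRing.unit /\ x11 = v^-1 * (1 - d') * x01.
Proof.
move=> hv Uv G1 G2 G3 H1 H2 H3.
have x21E : x21 = -(x01 + x11).
  by apply/eqP; rewrite -addr_eq0 addrC G1.
rewrite x21E z6 in G3; rewrite x21E z6 in G2.
have x11E : x11 = v^-1 * (1 - d') * x01.
  apply: (mulrI Uv); rewrite !mulrA mulrV // mul1r; apply: oppr_inj.
  rewrite -mulNr hv opprB. apply/eqP; by rewrite -addr_eq0 addrC G3.
split=> //.
have e2 := z1 H2; have e3 := z1 H3; rewrite sub0r in e2; rewrite sub0r in e3.
have := z3 (z2 e2 e3); rewrite -!mulrBr -hv => e02.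
have x02E : x02 = x01 * (a' - c') / v by rewrite -e02 mulrK.
rewrite e2 z7 x02E in H1.
apply: (@unit_lr _ ((1-c') + (a'-c') * (v^-1 * (1 - d'))) ((1-a') + (a'-c') / v * (1-b'))).
  by rewrite mulrDl -mulrA -x11E.
by rewrite mulrDr !mulrA.
Qed.
Lemma z9 (x p q : R) : (x + p) - (x + q) = p - q.
Proof. by rewrite opprD addrACA subrr add0r. Qed.
Lemma z8 (x y z : R) : x - y - (x - z) = z - y.
Proof. by rewrite opprB addrC addrA subrK. Qed.
Lemma final (a b c d x00 x10 x01 x11 : R) :
  a \is a GRing.unit -> b \is a GRing.unit -> c \is a GRing.unit -> d \is a GRing.unit ->
  d^-1 - c^-1 \is a GRing.unit -> d^-1 - b^-1 \is a GRing.unit ->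
  x10 \is a GRing.unit -> x01 \is a GRing.unit ->
  x00 = -(a^-1 + c^-1 * (d^-1 - c^-1)^-1 * (a^-1 - b^-1)) * x10 ->
  x11 = (d^-1 - b^-1)^-1 * (1 - d^-1) * x01 ->
  x00 * x10^-1 * x11 * x01^-1 =
  (d - c)^-1 * (d * b^-1 - c * a^-1) * (d * b^-1 - 1)^-1 * (d - 1).
Proof.
set u := d^-1 - c^-1; set v := d^-1 - b^-1.
move=> Ua Ub Uc Ud Uu Uv U10 U01 -> ->.
rewrite mulrK // -mulrA mulrK //.
have dcE : (d - c) * c^-1 = - (d * u) by rewrite mulrBl divrr // mulrBr divrr // opprB.
have dc : d - c = - (d * u) * c by rewrite -dcE mulrVK.
have Udc : d - c \is a GRing.unit by rewrite dc unitrMr // unitrN unitrMl.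
have dbE : d * b^-1 - 1 = - (d * v) by rewrite mulrBr divrr // opprB.
have Udb : d * b^-1 - 1 \is a GRing.unit by rewrite dbE unitrN unitrMl.
have KE : -(a^-1 + c^-1 / u * (a^-1 - b^-1)) = (d - c)^-1 * - (d * b^-1 - c * a^-1).
  apply: (mulrI Udc); rewrite mulVKr // mulrN mulrDr !mulrA dcE mulNr mulrK //.
  by rewrite mulrBl mulNr mulrBr z8.
have LE : v^-1 * (1 - d^-1) = (d * b^-1 - 1)^-1 * - (d - 1).
  apply: (mulrI Udb); rewrite mulVKr // mulrA dbE mulNr mulrK //.
  by rewrite mulNr mulrBr mulr1 divrr.
rewrite KE LE !mulrN !mulNr opprK !mulrA.
done.
Qed.

Definition o0 : 'I_3 := @Ordinal 3 0 isT.
Definition o1 : 'I_3 := @Ordinal 3 1 isT.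
Definition o2 : 'I_3 := @Ordinal 3 2 isT.
Definition p0 : 'I_2 := @Ordinal 2 0 isT.
Definition p1 : 'I_2 := @Ordinal 2 1 isT.
Lemma sum3 (F : 'I_3 -> R) : \sum_(i<3) F i = F o0 + F o1 + F o2.
Proof. rewrite !big_ord_recr big_ord0 /= add0r. congr (_+_+_); congr F; exact: val_inj. Qed.
Lemma sum2 (F : 'I_2 -> R) : \sum_(i<2) F i = F p0 + F p1.
Proof. rewrite !big_ord_recr big_ord0 /= add0r. congr (_+_); congr F; exact: val_inj. Qed.

Lemma unit1 (M : 'M[R]_1) : mx_invertible M -> M 0 0 \is a GRing.unit.
Proof.
move=> [X [h1 h2]].
have e1 := congr1 (fun Y : 'M[R]_1 => Y 0 0) h1.
have e2 := congr1 (fun Y : 'M[R]_1 => Y 0 0) h2.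
rewrite /= !mxE big_ord1 in e1; rewrite /= !mxE big_ord1 in e2.
exact: unit_lr e2 e1.
Qed.

Lemma unit2a (M : 'M[R]_2) : mx_invertible M -> M p0 p0 = 1 -> M p0 p1 = 1 ->
  M p1 p1 - M p1 p0 \is a GRing.unit.
Proof.
move=> [X [h1 h2]] m00 m01.
have e1 := congr1 (fun Y : 'M[R]_2 => Y p0 p1) h1.
have e2 := congr1 (fun Y : 'M[R]_2 => Y p1 p1) h1.
have e3 := congr1 (fun Y : 'M[R]_2 => Y p0 p0) h2.
have e4 := congr1 (fun Y : 'M[R]_2 => Y p0 p1) h2.
rewrite /= !mxE sum2 /= in e1; rewrite /= !mxE sum2 /= in e2.
rewrite /= !mxE sum2 /= in e3; rewrite /= !mxE sum2 /= in e4.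
rewrite m00 m01 !mul1r !mulr1 in e1 e3 e4.
have wE : X p1 p1 = - X p0 p1 by apply/eqP; rewrite -addr_eq0 addrC e1.
rewrite wE mulrN -mulrBl in e2.
apply: (@unit_lr _ (- X p0 p1) (- X p0 p1)).
  by rewrite mulNr -mulrN opprB mulrBr -(z9 (X p0 p0)) e3 e4 subr0.
by rewrite mulrN -mulNr opprB.
Qed.

Lemma unit2b (M : 'M[R]_2) : mx_invertible M -> M p0 p0 = 1 -> M p1 p0 = 1 ->
  M p1 p1 - M p0 p1 \is a GRing.unit.
Proof.
move=> [X [h1 h2]] m00 m10.
have e1 := congr1 (fun Y : 'M[R]_2 => Y p0 p0) h1.
have e2 := congr1 (fun Y : 'M[R]_2 => Y p1 p0) h1.
have e3 := congr1 (fun Y : 'M[R]_2 => Y p1 p0) h2.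
have e4 := congr1 (fun Y : 'M[R]_2 => Y p1 p1) h2.
rewrite /= !mxE sum2 /= in e1; rewrite /= !mxE sum2 /= in e2.
rewrite /= !mxE sum2 /= in e3; rewrite /= !mxE sum2 /= in e4.
rewrite m00 m10 !mul1r !mulr1 in e1 e2 e3 e4.
have wE : X p1 p1 = - X p1 p0 by apply/eqP; rewrite -addr_eq0 addrC e3.
rewrite wE mulNr -mulrBr in e4.
apply: (@unit_lr _ (- X p1 p0) (- X p1 p0)).
  by rewrite mulNr -mulrN opprB.
by rewrite mulrN -mulNr opprB mulrBl -(z9 (X p0 p0)) e1 e2 subr0.
Qed.

Definition pick2 (x y : 'I_3) (i : 'I_2) : 'I_3 := if val i == 0%N then x else y.
Lemma pick2_inc (x y : 'I_3) : (x < y)%N -> forall i j : 'I_2, (i < j)%N -> (pick2 x y i < pick2 x y j)%N.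
Proof. by move=> xy [[|[|?]] ?] [[|[|?]] ?]. Qed.
Lemma inc1 (x : 'I_3) : forall i j : 'I_1, (i < j)%N -> ((fun _ => x) i < (fun _ => x) j)%N.
Proof. by move=> [[|?] ?] [[|?] ?]. Qed.
Lemma J2E n (M : 'M[R]_n) i j : J2 M i j = (M j i)^-1.
Proof. by rewrite mxE. Qed.
Lemma i1E : i1 = o1. Proof. apply: val_inj; by rewrite /= inordK. Qed.
End Alg.

Theorem lemma13 (R : unitRingType) (a b c d : R) :
  in_hatS (mx3 a b c d) ->
  Psi (mx3 a b c d) (i1 : 'I_3) (i1 : 'I_3)
  = (d - c)^-1 * (d * b^-1 - c * a^-1) * (d * b^-1 - 1)^-1 * (d - 1).
Proof.
move=> [[hsub hJ] _].
have U1 (i j : 'I_3) : mx3 a b c d i j \is a GRing.unit.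
  by have := unit1 (hsub 1%N (fun _ => i) (fun _ => j) (inc1 i) (inc1 j)); rewrite mxE.
have Ua : a \is a GRing.unit by have := U1 o1 o1; rewrite mxE.
have Ub : b \is a GRing.unit by have := U1 o1 o2; rewrite mxE.
have Uc : c \is a GRing.unit by have := U1 o2 o1; rewrite mxE.
have Ud : d \is a GRing.unit by have := U1 o2 o2; rewrite mxE.
have Udc : d - c \is a GRing.unit.
  have := unit2a (hsub 2%N _ _ (@pick2_inc o0 o2 isT) (@pick2_inc o1 o2 isT)).
  by rewrite !mxE /=; apply.
have Udb : d - b \is a GRing.unit.
  have := unit2b (hsub 2%N _ _ (@pick2_inc o1 o2 isT) (@pick2_inc o0 o2 isT)).
  by rewrite !mxE /=; apply.
have Uu : d^-1 - c^-1 \is a GRing.unit.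
  have -> : d^-1 - c^-1 = d^-1 * (- (d - c)) * c^-1.
    by rewrite opprB mulrBr mulrBl mulVr // mul1r mulrK.
  by rewrite unitrMr ?unitrV // unitrMl ?unitrV // unitrN.
have Uv : d^-1 - b^-1 \is a GRing.unit.
  have -> : d^-1 - b^-1 = d^-1 * (- (d - b)) * b^-1.
    by rewrite opprB mulrBr mulrBl mulVr // mul1r mulrK.
  by rewrite unitrMr ?unitrV // unitrMl ?unitrV // unitrN.
rewrite /Psi /Phi !J2E invrK /LambdaL mxE i1E.
have -> : (0 : 'I_3) = o0 by exact: val_inj.
rewrite /mxinv; case: excluded_middle_informative => [h|//].
case: constructive_indefinite_description => B /= [h1 h2].
have E1 := congr1 (fun X : 'M[R]_3 => X o0 o0) h1.
have E2 := congr1 (fun X : 'M[R]_3 => X o1 o0) h1.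
have E3 := congr1 (fun X : 'M[R]_3 => X o2 o0) h1.
have G1 := congr1 (fun X : 'M[R]_3 => X o0 o1) h1.
have G2 := congr1 (fun X : 'M[R]_3 => X o1 o1) h1.
have G3 := congr1 (fun X : 'M[R]_3 => X o2 o1) h1.
have F1 := congr1 (fun X : 'M[R]_3 => X o1 o0) h2.
have F2 := congr1 (fun X : 'M[R]_3 => X o1 o1) h2.
have F3 := congr1 (fun X : 'M[R]_3 => X o1 o2) h2.
have H1 := congr1 (fun X : 'M[R]_3 => X o0 o0) h2.
have H2 := congr1 (fun X : 'M[R]_3 => X o0 o1) h2.
have H3 := congr1 (fun X : 'M[R]_3 => X o0 o2) h2.
rewrite /= !mxE sum3 !mxE /= ?invr1 ?mul1r ?mulr1 in E1.
rewrite /= !mxE sum3 !mxE /= ?invr1 ?mul1r ?mulr1 in E2.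
rewrite /= !mxE sum3 !mxE /= ?invr1 ?mul1r ?mulr1 in E3.
rewrite /= !mxE sum3 !mxE /= ?invr1 ?mul1r ?mulr1 in G1.
rewrite /= !mxE sum3 !mxE /= ?invr1 ?mul1r ?mulr1 in G2.
rewrite /= !mxE sum3 !mxE /= ?invr1 ?mul1r ?mulr1 in G3.
rewrite /= !mxE sum3 !mxE /= ?invr1 ?mul1r ?mulr1 in F1.
rewrite /= !mxE sum3 !mxE /= ?invr1 ?mul1r ?mulr1 in F2.
rewrite /= !mxE sum3 !mxE /= ?invr1 ?mul1r ?mulr1 in F3.
rewrite /= !mxE sum3 !mxE /= ?invr1 ?mul1r ?mulr1 in H1.
rewrite /= !mxE sum3 !mxE /= ?invr1 ?mul1r ?mulr1 in H2.
rewrite /= !mxE sum3 !mxE /= ?invr1 ?mul1r ?mulr1 in H3.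
have [U10 x00E] := pieceA (erefl (d^-1 - c^-1)) Uu E1 E2 E3 F1 F2 F3.
have [U01 x11E] := pieceB (erefl (d^-1 - b^-1)) Uv G1 G2 G3 H1 H2 H3.
exact: final Ua Ub Uc Ud Uu Uv U10 U01 x00E x11E.
Qed.
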